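(* Let $s_0<s_1<\dots<s_{\ell_x}$ and $t_0<t_1<\dots<t_{\ell_y}$ be real partitions and let $\{C_{ij}\in\mathbb{R}:0\le i\le \ell_x-1,\ 0\le j\le\ell_y-1\}$ be given, with $K:=\max_{i,j}|C_{ij}|>0$ and $\Delta:=\max_{i,j}\{s_{i+1}-s_i,t_{j+1}-t_j\}$. For an integer $\gamma\ge1$ and a pair of real sequences $(p,q)$ set $$\|(p,q)\|_\gamma=\max\Big\{\sup_{n\ge0}\Big|\frac{(n!)^2p_n}{(\gamma K\Delta)^n}\Big|,\ \sup_{n\ge0}\Big|\frac{(n!)^2q_n}{(\gamma K\Delta)^n}\Big|\Big\}.$$ Define sequences $p^{ij},q^{ij}$ by $p^{i0}=q^{0j}=(1,0,0,\dots)$ and recursively $(p^{i,j+1},q^{i+1,j})=\Lambda_{ij}(p^{ij},q^{ij})$, where for $n\ge0$ $$p^{i,j+1}_n=\sum_{k=0}^{n}p^{ij}_k\frac{(C_{ij}(t_{j+1}-t_j))^{n-k}k!}{(n-k)!\,n!}+\sum_{k=1}^{\infty}q^{ij}_k\frac{C_{ij}^n(t_{j+1}-t_j)^{n+k}k!}{(n+k)!\,n!},$$ $$q^{i+1,j}_n=\sum_{k=0}^{n}q^{ij}_k\frac{(C_{ij}(s_{i+1}-s_i))^{n-k}k!}{(n-k)!\,n!}+\sum_{k=1}^{\infty}p^{ij}_k\frac{C_{ij}^n(s_{i+1}-s_i)^{n+k}k!}{(n+k)!\,n!},$$ and write $\Lambda_{ij}:=(p^{i,j+1},q^{i+1,j})$.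 Then for all $0\le i\le\ell_x-1$, $0\le j\le\ell_y-1$, $$\|\Lambda_{ij}\|_{i+j+1}\le f(i+j),\qquad\text{where } f(k):=\prod_{m=0}^{k}I_0(2\sqrt{mK}\,\Delta).$$
   Context: $I_0$ is the zero-order modified Bessel function of the first kind, $I_0(2z)=\sum_{k\ge0}z^{2k}/(k!)^2$. The sequences $p^{ij},q^{ij}$ are the power-series coefficients of the solution $k$ of $\partial^2k/\partial s\partial t=C_{ij}k$ on each cell $[s_i,s_{i+1}]\times[t_j,t_{j+1}]$ with $k(s_0,\cdot)=k(\cdot,t_0)=1$, i.e. $k(s,t_j)=\sum_n p^{ij}_n(s-s_i)^n$ and $k(s_i,t)=\sum_n q^{ij}_n(t-t_j)^n$. *)

(* Defs.v *)
From Stdlib Require Import Reals Factorial.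
From Coquelicot Require Import Coquelicot.
Open Scope R_scope.

Definition Rbar_max2 (x y : Rbar) : Rbar :=
  match Rbar_le_dec x y with left _ => y | right _ => x end.

(* max of g 0, ..., g (n-1); 0 for n = 0 (only used on nonnegative data) *)
Fixpoint Rmax_upto (n : nat) (g : nat -> R) : R :=
  match n with
  | O => 0
  | S n' => Rmax (Rmax_upto n' g) (g n')
  end.

Definition Kconst (lx ly : nat) (C : nat -> nat -> R) : R :=
  Rmax_upto lx (fun i => Rmax_upto ly (fun j => Rabs (C i j))).

Definition DeltaC (lx ly : nat) (s t : nat -> R) : R :=
  Rmax (Rmax_upto lx (fun i => s (S i) - s i))
       (Rmax_upto ly (fun j => t (S j) - t j)).

Definition normg (gamma : nat) (K D : R) (p q : nat -> R) : Rbar :=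
  Rbar_max2
    (Sup_seq (fun n => Finite (Rabs ((INR (Factorial.fact n))^2 * p n / (INR gamma * K * D)^n))))
    (Sup_seq (fun n => Finite (Rabs ((INR (Factorial.fact n))^2 * q n / (INR gamma * K * D)^n)))).

Definition e0 : nat -> R := fun n => if Nat.eqb n 0 then 1 else 0.

Definition LamComp (c h : R) (a b : nat -> R) : nat -> R := fun n =>
  sum_f_R0 (fun k => a k * (c * h)^(n - k) * INR (Factorial.fact k)
                      / (INR (Factorial.fact (n - k)) * INR (Factorial.fact n))) n
  + Series (fun k => b (S k) * c^n * h^(n + S k) * INR (Factorial.fact (S k))
                      / (INR (Factorial.fact (n + S k)) * INR (Factorial.fact n))).

Definition Lam (s t : nat -> R) (C : nat -> nat -> R) (i j : nat)
    (pq : (nat -> R) * (nat -> R)) : (nat -> R) * (nat -> R) :=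
  (LamComp (C i j) (t (S j) - t j) (fst pq) (snd pq),
   LamComp (C i j) (s (S i) - s i) (snd pq) (fst pq)).

(* PQ i j = (p^{ij}, q^{ij}) with p^{i0} = q^{0j} = e0 *)
Fixpoint PQ (s t : nat -> R) (C : nat -> nat -> R) (i : nat) {struct i}
    : nat -> (nat -> R) * (nat -> R) :=
  fix inner (j : nat) : (nat -> R) * (nat -> R) :=
    let q := match i with
             | O => e0
             | S i' => snd (Lam s t C i' j (PQ s t C i' j))
             end in
    let p := match j with
             | O => e0
             | S j' => fst (Lam s t C i j' (inner j'))
             end in
    (p, q).

Definition I0 (x : R) : R :=
  Series (fun k => (x / 2)^(2 * k) / (INR (Factorial.fact k))^2).

Fixpoint fB (K D : R) (k : nat) : R :=
  match k with
  | O => I0 (2 * sqrt (INR 0 * K) * D)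
  | S k' => fB K D k' * I0 (2 * sqrt (INR (S k') * K) * D)
  end.

(* Main.v *)
Require Import Defs.
From Stdlib Require Import Reals Lra Lia Psatz.
From Coquelicot Require Import Coquelicot.
Open Scope R_scope.

Lemma fact_pos_R n : 0 < INR (Factorial.fact n).
Proof. apply lt_0_INR, Factorial.lt_O_fact. Qed.

Lemma ex_exp_ser x : ex_series (fun k => x^k / INR (Factorial.fact k)).
Proof.
  eexists. eapply is_series_ext; [|exact (is_exp_Reals x)].
  intros n. unfold scal; simpl; unfold mult; simpl. unfold Rdiv. f_equal.
Qed.

Lemma ex_I0ser x : 0 <= x -> ex_series (fun k => x^k / (INR (Factorial.fact k))^2).
Proof.
  intros Hx. eapply (@ex_series_le R_AbsRing R_CompleteNormedModule); [|apply (ex_exp_ser x)].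
  intros n. unfold norm; simpl. rewrite Rabs_pos_eq.
  - pose proof (fact_pos_R n). assert (1 <= INR (Factorial.fact n)).
    { apply (le_INR 1). pose proof (Factorial.lt_O_fact n). lia. }
    assert (0 <= x^n) by (apply pow_le; auto).
    unfold Rdiv. apply Rmult_le_compat_l; auto.
    apply Rinv_le_contravar; auto. nra.
  - apply Rdiv_le_0_compat. apply pow_le; auto. pose proof (fact_pos_R n); nra.
Qed.

Lemma Series_zero : Series (fun _ => 0) = 0.
Proof.
  rewrite (Series_ext _ (fun n => 0 * 0)) by (intros; ring).
  rewrite (Series_scal_l 0 (fun _ => 0)). ring.
Qed.

Lemma I0_ge1 x : 0 <= x -> 1 <= Series (fun k => x^k / (INR (Factorial.fact k))^2).
Proof.
  intros Hx. set (f := fun k => x^k / (INR (Factorial.fact k))^2).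
  assert (Hf : forall k, 0 <= f k).
  { intros k. unfold f. apply Rdiv_le_0_compat. apply pow_le; auto.
    pose proof (fact_pos_R k); nra. }
  assert (Hf0 : f 0%nat = 1). { unfold f. simpl. field. }
  assert (He : ex_series f) by (apply ex_I0ser; auto).
  rewrite Series_incr_1 by exact He.
  assert (0 <= Series (fun k => f (S k))).
  { apply Rle_trans with (Series (fun _ => 0)).
    - rewrite Series_zero; lra.
    - apply Series_le.
      + intros n; split; [lra|]. apply Hf.
      + apply (ex_series_incr_1 f); auto. }
  lra.
Qed.

Lemma I0_eq g K D : 0 <= g -> 0 <= K ->
  I0 (2 * sqrt (g * K) * D) = Series (fun k => (g*K*D^2)^k / (INR (Factorial.fact k))^2).
Proof.
  intros. unfold I0. apply Series_ext. intros n.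
  rewrite pow_mult. f_equal. f_equal.
  replace (2 * sqrt (g * K) * D / 2) with (sqrt (g*K) * D) by field.
  rewrite Rpow_mult_distr. simpl. rewrite !Rmult_1_r. rewrite sqrt_sqrt by nra. ring.
Qed.

Lemma fact_mul_le n m : (Factorial.fact n * Factorial.fact m <= Factorial.fact (n + m))%nat.
Proof.
  induction m.
  - rewrite Nat.add_0_r. simpl. lia.
  - rewrite Nat.add_succ_r. change (Factorial.fact (S (n+m))) with (S (n+m) * Factorial.fact (n+m))%nat.
    change (Factorial.fact (S m)) with (S m * Factorial.fact m)%nat. nia.
Qed.

Lemma fact_mul_le_R n m : INR (Factorial.fact n) * INR (Factorial.fact m) <= INR (Factorial.fact (n + m)).
Proof. rewrite <- mult_INR. apply le_INR, fact_mul_le. Qed.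

Definition Bnd (g K D : R) (a : nat -> R) (M : R) :=
  forall k, Rabs (a k) <= M * (g*K*D)^k / (INR (Factorial.fact k))^2.

Lemma abs_shape a P F Dn : 0 <= F -> 0 < Dn -> Rabs (a * P * F / Dn) = Rabs a * Rabs P * (F / Dn).
Proof.
  intros. unfold Rdiv. rewrite !Rabs_mult, Rabs_inv, (Rabs_pos_eq F), (Rabs_pos_eq Dn) by lra. ring.
Qed.

Lemma S1_bound g K D c h a M n : 0 <= g -> 0 < K -> 0 <= D -> Rabs c <= K -> 0 <= h <= D -> 0 <= M ->
  Bnd g K D a M ->
  Rabs (sum_f_R0 (fun k => a k * (c * h)^(n - k) * INR (Factorial.fact k)
                      / (INR (Factorial.fact (n - k)) * INR (Factorial.fact n))) n)
  <= M * (K*D)^n / (INR (Factorial.fact n))^2 * (g + 1)^n.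
Proof.
  intros Hg HK HD Hc Hh HM Ha.
  eapply Rle_trans; [apply sum_f_R0_triangle|].
  rewrite binomial, scal_sum.
  apply sum_Rle. intros k Hk.
  destruct (Nat.le_exists_sub k n Hk) as [m [Hm _]]. subst n.
  replace (m + k - k)%nat with m by lia. rewrite (Nat.add_comm m k).
  pose proof (fact_pos_R k). pose proof (fact_pos_R m). pose proof (fact_pos_R (k+m)).
  rewrite abs_shape by (lra || nra).
  rewrite <- RPow_abs.
  assert (HP : Rabs (c*h) ^ m <= (K*D)^m).
  { apply pow_incr. split; [apply Rabs_pos|]. rewrite Rabs_mult, (Rabs_pos_eq h) by lra.
    apply Rmult_le_compat; try lra; apply Rabs_pos. }
  assert (0 <= Rabs (c*h) ^ m) by (apply pow_le, Rabs_pos).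
  assert (0 <= INR (Factorial.fact k) / (INR (Factorial.fact m) * INR (Factorial.fact (k + m)))).
  { apply Rdiv_le_0_compat; nra. }
  eapply Rle_trans.
  { apply Rmult_le_compat_r; [assumption|].
    apply Rmult_le_compat; [apply Rabs_pos|assumption|apply Ha|apply HP]. }
  unfold Binomial.C. replace (k + m - k)%nat with m by lia.
  rewrite pow1, Rmult_1_r, !Rpow_mult_distr, pow_add, pow_add.
  right. field. split; lra.
Qed.

Lemma S2_bound g K D c h b M n : 0 <= g -> 0 < K -> 0 <= D -> Rabs c <= K -> 0 <= h <= D -> 0 <= M ->
  Bnd g K D b M ->
  Rabs (Series (fun k => b (S k) * c^n * h^(n + S k) * INR (Factorial.fact (S k))
                      / (INR (Factorial.fact (n + S k)) * INR (Factorial.fact n))))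
  <= M * (K*D)^n / (INR (Factorial.fact n))^2 *
     (Series (fun k => (g*K*D^2)^k / (INR (Factorial.fact k))^2) - 1).
Proof.
  intros Hg HK HD Hc Hh HM Hb.
  set (x := g*K*D^2).
  assert (Hx : 0 <= x) by (unfold x; apply Rmult_le_pos; [nra|apply pow2_ge_0]).
  set (w := fun k => x^k / (INR (Factorial.fact k))^2).
  set (cst := M * (K*D)^n / (INR (Factorial.fact n))^2).
  assert (Hcst : 0 <= cst).
  { unfold cst. pose proof (fact_pos_R n). apply Rdiv_le_0_compat; [|nra].
    apply Rmult_le_pos; auto. apply pow_le; nra. }
  set (u := fun k => b (S k) * c^n * h^(n + S k) * INR (Factorial.fact (S k))
                      / (INR (Factorial.fact (n + S k)) * INR (Factorial.fact n))).
  set (v := fun k => cst * w (S k)).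
  assert (Hw : ex_series w) by (apply ex_I0ser; auto).
  assert (Hv : ex_series v).
  { apply (@ex_series_scal_l R_AbsRing R_NormedModule cst (fun k => w (S k))).
    apply (ex_series_incr_1 w); auto. }
  assert (Huv : forall k, Rabs (u k) <= v k).
  { intros k. unfold u, v, w, cst.
    pose proof (fact_pos_R (S k)). pose proof (fact_pos_R n). pose proof (fact_pos_R (n + S k)).
    rewrite abs_shape by (lra || nra).
    rewrite Rabs_mult, <- !RPow_abs, (Rabs_pos_eq h) by lra.
    assert (0 <= Rabs c ^ n) by (apply pow_le, Rabs_pos).
    assert (0 <= h ^ (n + S k)) by (apply pow_le; lra).
    assert (0 <= INR (Factorial.fact (S k)) / (INR (Factorial.fact (n + S k)) * INR (Factorial.fact n))).
    { apply Rdiv_le_0_compat; nra. }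
    apply Rle_trans with (M * (g*K*D)^(S k) / INR (Factorial.fact (S k))^2 * K^n * D^(n+S k) *
       (INR (Factorial.fact (S k)) / (INR (Factorial.fact (n + S k)) * INR (Factorial.fact n)))).
    { apply Rmult_le_compat_r; [assumption|].
      assert (0 <= Rabs (b (S k))) by apply Rabs_pos.
      apply Rmult_le_compat; [nra|assumption| |apply pow_incr; lra].
      apply Rmult_le_compat; auto. apply pow_incr; split; [apply Rabs_pos|auto]. }
    pose proof (fact_mul_le_R n (S k)).
    apply Rle_trans with ((M * g ^ S k * K ^ S k * D ^ S k * K ^ n * D ^ n * D ^ S k) *
           / (INR (Factorial.fact (S k)) * INR (Factorial.fact (n + S k)) * INR (Factorial.fact n))).
    { right. rewrite !Rpow_mult_distr, pow_add. field; repeat split; lra. }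
    unfold x. rewrite !Rpow_mult_distr, <- !pow_mult.
    replace (M * (K ^ n * D ^ n) / INR (Factorial.fact n) ^ 2 *
      (g ^ S k * K ^ S k * D ^ (2 * S k) / INR (Factorial.fact (S k)) ^ 2))
     with ((M * g ^ S k * K ^ S k * D ^ S k * K ^ n * D ^ n * D ^ S k) *
           / ((INR (Factorial.fact (S k)) * INR (Factorial.fact n)) * INR (Factorial.fact (S k)) * INR (Factorial.fact n)))
     by (replace (2 * S k)%nat with (S k + S k)%nat by lia; rewrite pow_add; field; repeat split; lra).
    apply Rmult_le_compat_l.
    - repeat apply Rmult_le_pos; try apply pow_le; lra.
    - apply Rinv_le_contravar; [repeat apply Rmult_lt_0_compat; lra|].
      assert (0 <= INR (Factorial.fact (S k)) * INR (Factorial.fact n) *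
        (INR (Factorial.fact (n + S k)) - INR (Factorial.fact n) * INR (Factorial.fact (S k)))).
      { apply Rmult_le_pos; [nra|lra]. }
      nra. }
  assert (Hu : ex_series (fun k => Rabs (u k))).
  { apply (@ex_series_le R_AbsRing R_CompleteNormedModule) with v; auto.
    intros k. unfold norm; simpl. rewrite Rabs_Rabsolu. auto. }
  eapply Rle_trans; [apply Series_Rabs; auto|].
  eapply Rle_trans; [apply Series_le; [intros k; split; [apply Rabs_pos|apply Huv]|exact Hv]|].
  unfold v. rewrite Series_scal_l. rewrite (Series_incr_1 w Hw).
  assert (Hw0 : w 0%nat = 1) by (unfold w; simpl; field). rewrite Hw0. right. ring.
Qed.

Lemma key g K D c h a b M : 0 <= g -> 0 < K -> 0 <= D -> Rabs c <= K -> 0 <= h <= D -> 0 <= M ->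
  Bnd g K D a M -> Bnd g K D b M ->
  Bnd (g+1) K D (LamComp c h a b) (M * Series (fun k => (g*K*D^2)^k / (INR (Factorial.fact k))^2)).
Proof.
  intros Hg HK HD Hc Hh HM Ha Hb n. unfold LamComp.
  pose proof (S1_bound g K D c h a M n Hg HK HD Hc Hh HM Ha) as H1.
  pose proof (S2_bound g K D c h b M n Hg HK HD Hc Hh HM Hb) as H2.
  set (I := Series (fun k => (g*K*D^2)^k / (INR (Factorial.fact k))^2)) in *.
  assert (HI : 1 <= I).
  { apply I0_ge1. apply Rmult_le_pos; [nra|apply pow2_ge_0]. }
  set (cst := M * (K*D)^n / (INR (Factorial.fact n))^2) in *.
  assert (Hcst : 0 <= cst).
  { unfold cst. pose proof (fact_pos_R n). apply Rdiv_le_0_compat; [|nra].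
    apply Rmult_le_pos; auto. apply pow_le; nra. }
  assert (HP : 1 <= (g+1)^n).
  { pose proof (pow_incr 1 (g+1) n) as Hp. rewrite pow1 in Hp. apply Hp. lra. }
  eapply Rle_trans; [apply Rabs_triang|].
  apply Rle_trans with (cst * ((g+1)^n + (I - 1))); [rewrite Rmult_plus_distr_l; apply Rplus_le_compat; assumption|].
  replace (M * I * ((g + 1) * K * D) ^ n / INR (Factorial.fact n) ^ 2)
    with (cst * ((g+1)^n * I)).
  2:{ unfold cst. rewrite !Rpow_mult_distr. pose proof (fact_pos_R n). field. lra. }
  apply Rmult_le_compat_l; auto. nra.
Qed.

Lemma Sup_seq_le_const (u : nat -> R) (M : R) : (forall n, u n <= M) -> Rbar_le (Sup_seq (fun n => Finite (u n))) (Finite M).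
Proof.
  intros H.
  assert (Hc : Sup_seq (fun _ => Finite M) = Finite M).
  { apply is_sup_seq_unique. intros eps. pose proof (cond_pos eps). split.
    - intros n. simpl. lra.
    - exists 0%nat. simpl. lra. }
  rewrite <- Hc. apply Sup_seq_le. intros n. simpl. apply H.
Qed.

Lemma norm_from_Bnd (gam : nat) K D p q M : 0 < K -> 0 < D -> (0 < gam)%nat ->
  Bnd (INR gam) K D p M -> Bnd (INR gam) K D q M -> Rbar_le (normg gam K D p q) (Finite M).
Proof.
  intros HK HD Hg Hp Hq.
  assert (HW : 0 < INR gam * K * D).
  { pose proof (lt_0_INR _ Hg). repeat apply Rmult_lt_0_compat; lra. }
  assert (Hgen : forall a, Bnd (INR gam) K D a M -> forall n,
     Rabs ((INR (Factorial.fact n))^2 * a n / (INR gam * K * D)^n) <= M).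
  { intros a Ha n. pose proof (fact_pos_R n). pose proof (pow_lt _ n HW).
    specialize (Ha n).
    rewrite Rabs_div by lra. rewrite Rabs_mult, (Rabs_pos_eq (_ ^ 2)) by nra.
    rewrite (Rabs_pos_eq (_ ^ n)) by lra.
    apply Rle_trans with (INR (Factorial.fact n) ^ 2 * (M * (INR gam * K * D) ^ n / INR (Factorial.fact n) ^ 2) / (INR gam * K * D) ^ n).
    - unfold Rdiv. apply Rmult_le_compat_r; [apply Rlt_le, Rinv_0_lt_compat; lra|].
      apply Rmult_le_compat_l; [nra|exact Ha].
    - right. field. split; lra. }
  unfold normg, Rbar_max2. destruct Rbar_le_dec as [Hl|Hl].
  - apply Sup_seq_le_const. intros m. apply Hgen, Hq.
  - apply Sup_seq_le_const. intros m. apply Hgen, Hp.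
Qed.

Lemma Rmax_upto_ge n (g : nat -> R) i : (i < n)%nat -> g i <= Rmax_upto n g.
Proof.
  induction n; intros H; [lia|]. simpl.
  destruct (Nat.eq_dec i n).
  - subst i. apply Rmax_r.
  - eapply Rle_trans; [apply IHn; lia|apply Rmax_l].
Qed.

Lemma PQ_eq s t C i j : PQ s t C i j =
  (match j with O => e0 | S j' => fst (Lam s t C i j' (PQ s t C i j')) end,
   match i with O => e0 | S i' => snd (Lam s t C i' j (PQ s t C i' j)) end).
Proof. destruct i, j; reflexivity. Qed.

Lemma Bnd_e0 g K D M : 0 <= g -> 0 <= K -> 0 <= D -> 1 <= M -> Bnd g K D e0 M.
Proof.
  intros Hg HK HD HM k. unfold e0. destruct k; simpl.
  - rewrite Rabs_R1. lra.
  - rewrite Rabs_R0. apply Rdiv_le_0_compat.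
    + apply Rmult_le_pos; [lra|]. apply Rmult_le_pos; [|apply pow_le]; apply Rmult_le_pos; try apply Rmult_le_pos; lra.
    + pose proof (fact_pos_R (S k)). simpl in H. nra.
Qed.

Lemma Bnd_mono g K D a M M' : 0 <= g -> 0 <= K -> 0 <= D -> M <= M' -> Bnd g K D a M -> Bnd g K D a M'.
Proof.
  intros Hg HK HD HM Ha k. eapply Rle_trans; [apply Ha|].
  pose proof (fact_pos_R k).
  unfold Rdiv. rewrite !Rmult_assoc. apply Rmult_le_compat_r; [|exact HM].
  apply Rmult_le_pos; [apply pow_le; repeat apply Rmult_le_pos; lra|].
  apply Rlt_le, Rinv_0_lt_compat. nra.
Qed.

Definition gf K D k := match k with O => 1 | S k' => fB K D k' end.

Lemma fB_split K D k : fB K D k = gf K D k * I0 (2 * sqrt (INR k * K) * D).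
Proof. destruct k; simpl; [ring|]. reflexivity. Qed.

Lemma I0_ge1' g K D : 0 <= g -> 0 <= K -> 1 <= I0 (2 * sqrt (g * K) * D).
Proof. intros. rewrite I0_eq by auto. apply I0_ge1. apply Rmult_le_pos; [nra|apply pow2_ge_0]. Qed.

Lemma gf_ge1 K D k : 0 <= K -> 1 <= gf K D k.
Proof.
  intros HK. induction k; simpl; [lra|].
  rewrite fB_split. pose proof (I0_ge1' (INR k) K D (pos_INR k) HK). nra.
Qed.

Theorem mainTheorem4 (lx ly : nat) (s t : nat -> R) (C : nat -> nat -> R)
  (Hs : forall i : nat, (i < lx)%nat -> s i < s (S i))
  (Ht : forall j : nat, (j < ly)%nat -> t j < t (S j))
  (HK : 0 < Kconst lx ly C) :
  forall i j : nat, (i < lx)%nat -> (j < ly)%nat ->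
    Rbar_le
      (normg (i + j + 1)%nat (Kconst lx ly C) (DeltaC lx ly s t)
         (fst (Lam s t C i j (PQ s t C i j)))
         (snd (Lam s t C i j (PQ s t C i j))))
      (Finite (fB (Kconst lx ly C) (DeltaC lx ly s t) ((i + j)%nat))).
Proof.
  intros i0 j0 Hi0 Hj0.
  set (K := Kconst lx ly C) in *. set (D := DeltaC lx ly s t).
  assert (HCb : forall i j, (i < lx)%nat -> (j < ly)%nat -> Rabs (C i j) <= K).
  { intros i j Hi Hj. unfold K, Kconst.
    eapply Rle_trans; [|apply (Rmax_upto_ge lx (fun i => Rmax_upto ly (fun j => Rabs (C i j))) i Hi)].
    apply (Rmax_upto_ge ly (fun j => Rabs (C i j)) j Hj). }
  assert (Hsb : forall i, (i < lx)%nat -> 0 <= s (S i) - s i <= D).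
  { intros i Hi. split; [pose proof (Hs i Hi); lra|]. unfold D, DeltaC.
    eapply Rle_trans; [|apply Rmax_l]. apply (Rmax_upto_ge lx (fun i => s (S i) - s i) i Hi). }
  assert (Htb : forall j, (j < ly)%nat -> 0 <= t (S j) - t j <= D).
  { intros j Hj. split; [pose proof (Ht j Hj); lra|]. unfold D, DeltaC.
    eapply Rle_trans; [|apply Rmax_r]. apply (Rmax_upto_ge ly (fun j => t (S j) - t j) j Hj). }
  assert (HD : 0 < D).
  { pose proof (Ht j0 Hj0). pose proof (Htb j0 Hj0). lra. }
  assert (Hstep : forall i j, (i < lx)%nat -> (j < ly)%nat ->
     Bnd (INR (i+j)) K D (fst (PQ s t C i j)) (gf K D (i+j)) ->
     Bnd (INR (i+j)) K D (snd (PQ s t C i j)) (gf K D (i+j)) ->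
     Bnd (INR (i+j) + 1) K D (fst (Lam s t C i j (PQ s t C i j))) (fB K D (i+j)) /\
     Bnd (INR (i+j) + 1) K D (snd (Lam s t C i j (PQ s t C i j))) (fB K D (i+j))).
  { intros i j Hi Hj Hp Hq. unfold Lam. simpl fst; simpl snd.
    rewrite fB_split, I0_eq by (auto using pos_INR; lra).
    pose proof (gf_ge1 K D (i+j) (Rlt_le _ _ HK)).
    split; apply key; auto using pos_INR; try lra. }
  assert (Hmain : forall n i j, (i+j = n)%nat -> (i < lx)%nat -> (j < ly)%nat ->
     Bnd (INR (i+j) + 1) K D (fst (Lam s t C i j (PQ s t C i j))) (fB K D (i+j)) /\
     Bnd (INR (i+j) + 1) K D (snd (Lam s t C i j (PQ s t C i j))) (fB K D (i+j))).
  { induction n; intros i j Hn Hi Hj; apply Hstep; auto.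
    - assert (i = 0%nat) by lia. assert (j = 0%nat) by lia. subst i j.
      apply Bnd_e0; simpl; lra.
    - assert (i = 0%nat) by lia. assert (j = 0%nat) by lia. subst i j.
      apply Bnd_e0; simpl; lra.
    - rewrite PQ_eq. simpl fst. destruct j as [|j'].
      + apply Bnd_e0; auto using pos_INR; try lra. apply gf_ge1; lra.
      + destruct (IHn i j') as [H1 _]; try lia.
        replace (i + S j')%nat with (S (i + j')) by lia. rewrite S_INR. exact H1.
    - rewrite PQ_eq. simpl snd. destruct i as [|i'].
      + apply Bnd_e0; auto using pos_INR; try lra. apply gf_ge1; lra.
      + destruct (IHn i' j) as [_ H1]; try lia.
        replace (S i' + j)%nat with (S (i' + j)) by lia. rewrite S_INR. exact H1. }
  destruct (Hmain _ i0 j0 eq_refl Hi0 Hj0) as [H1 H2].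
  apply norm_from_Bnd; auto; [lia| |]; rewrite plus_INR; simpl INR; assumption.
Qed.
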